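(* Let $\mathcal{M}=(\Sigma,\Gamma,\mathcal{H},U,M)$ be a QMM, $\rho$ a Hermitian operator on $\mathcal{H}$, and $m,k\in\mathbb{N}$. If $\operatorname{span}\mathfrak{D}_l(\rho,m)=\operatorname{span}\mathfrak{D}_l(\rho,m+1)$ for every $0\le l\le k$, then $\operatorname{span}\mathfrak{D}_l(\rho,m)=\operatorname{span}\mathfrak{D}_l(\rho,m+\delta)$ for every $0\le l\le k$ and every $\delta\in\mathbb{N}$.
   Context: A quantum Mealy machine (QMM) is a tuple $\mathcal{M}=(\Sigma,\Gamma,\mathcal{H},U,M)$ where $\Sigma,\Gamma$ are finite alphabets, $\mathcal{H}$ a finite-dimensional complex Hilbert space, $U=\{U_\sigma\}_{\sigma\in\Sigma}$ unitary operators on $\mathcal{H}$, $M=\{M_\gamma\}_{\gamma\in\Gamma}$ linear operators with $\sum_\gamma M_\gamma^\dagger M_\gamma=I$. For a word $a$, $|a|$ is its length, $a[l:r]=a[l]\cdots a[r]$ (empty if $l>r$), $U_a=U_{a[|a|]}\cdots U_{a[1]}$, $U_\epsilon=I$. A scheduler for $a\in\Sigma^*$ is a finite non-decreasing integer sequence $\mathcal{S}=(s_1\le\dots\le s_{|\mathcal{S}|})$ in $\{0,\dots,|a|\}$ (possibly empty); $\mathfrak{S}_a$ is the set of schedulers for $a$. With $s_0=0$, $s_{|\mathcal{S}|+1}=|a|$, $a_i=a[s_{i-1}+1:s_i]$. For $b\in\Gamma^{|\mathcal{S}|}$, $V_{b|a,\mathcal{S}}=U_{a_{|\mathcal{S}|+1}}M_{b_{|\mathcal{S}|}}U_{a_{|\mathcal{S}|}}\cdots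 M_{b_1}U_{a_1}$ and $\rho^{\mathcal{M}}_{b|a,\mathcal{S}}=V_{b|a,\mathcal{S}}\rho V_{b|a,\mathcal{S}}^\dagger$. For a Hermitian $\rho$ and $k,m\in\mathbb{N}$, $\mathfrak{D}_k(\rho,m)=\{\rho^{\mathcal{M}}_{b|a,\mathcal{S}}: a\in\Sigma^*,\mathcal{S}\in\mathfrak{S}_a,b\in\Gamma^{|\mathcal{S}|},|a|+|\mathcal{S}|\le m,|\mathcal{S}|\le k\}$; spans are complex linear spans in the space of operators on $\mathcal{H}$. *)

(* Defs.v *)
(* Complex field modelled by an arbitrary numClosedFieldType C. *)
From HB Require Import structures.
From mathcomp Require Import all_boot all_order all_algebra.
Set Implicit Arguments. Unset Strict Implicit. Unset Printing Implicit Defensive.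
Import Order.TTheory GRing.Theory Num.Theory.
Local Open Scope ring_scope.

Section QMM.
Variables (C : numClosedFieldType) (n : nat).

Definition dagger (A : 'M[C]_n) : 'M[C]_n := (map_mx Num.conj A)^T.

Definition unitary (A : 'M[C]_n) : Prop := dagger A *m A = 1%:M.
Definition herm_op (A : 'M[C]_n) : Prop := dagger A = A.

Definition is_QMM (Sigma Gamma : finType) (U : Sigma -> 'M[C]_n)
  (M : Gamma -> 'M[C]_n) : Prop :=
  (forall s, unitary (U s)) /\ \sum_(g : Gamma) dagger (M g) *m M g = 1%:M.

Variables (Sigma Gamma : finType) (U : Sigma -> 'M[C]_n) (M : Gamma -> 'M[C]_n).

(* U_a = U_{a[|a|]} ... U_{a[1]} *)
Definition Uword (a : seq Sigma) : 'M[C]_n := foldl (fun acc s => U s *m acc) 1%:M a.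

(* a[l+1 : r] *)
Definition segment (a : seq Sigma) (l r : nat) : seq Sigma := take (r - l) (drop l a).

(* Vrec a prev S b = U_{a_{last}} M_{b_k} ... M_{b_1} U_{a[prev+1 : s_1]} *)
Fixpoint Vrec (a : seq Sigma) (prev : nat) (S : seq nat) (b : seq Gamma) : 'M[C]_n :=
  match S, b with
  | s :: S', g :: b' => Vrec a s S' b' *m M g *m Uword (segment a prev s)
  | _, _ => Uword (segment a prev (size a))
  end.

Definition Vop (b : seq Gamma) (a : seq Sigma) (S : seq nat) : 'M[C]_n := Vrec a 0 S b.

Definition is_scheduler (a : seq Sigma) (S : seq nat) : bool :=
  sorted leq S && all (fun s => s <= size a)%N S.

Definition inD (rho : 'M[C]_n) (k m : nat) (X : 'M[C]_n) : Prop :=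
  exists (a : seq Sigma) (S : seq nat) (b : seq Gamma),
    [/\ is_scheduler a S, size b = size S, (size a + size S <= m)%N,
        (size S <= k)%N & X = Vop b a S *m rho *m dagger (Vop b a S)].

End QMM.

Definition in_span (C : numClosedFieldType) (n : nat) (P : 'M[C]_n -> Prop)
  (X : 'M[C]_n) : Prop :=
  exists l : seq ('M[C]_n * C),
    (forall p, p \in l -> P p.1) /\ X = \sum_(p <- l) p.2 *: p.1.

Definition span_eq (C : numClosedFieldType) (n : nat) (P Q : 'M[C]_n -> Prop) : Prop :=
  forall X, in_span P X <-> in_span Q X.

(* Main.v *)
Require Import Defs.
From HB Require Import structures.
From mathcomp Require Import all_boot all_order all_algebra.
From mathcomp Require Import zify.
Import Order.TTheory GRing.Theory Num.Theory.
Local Open Scope ring_scope.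

Section Aux.
Variables (C : numClosedFieldType) (n : nat) (Sigma Gamma : finType).
Variables (U : Sigma -> 'M[C]_n) (M : Gamma -> 'M[C]_n).

Lemma dagger_mul (A B : 'M[C]_n) : dagger (A *m B) = dagger B *m dagger A.
Proof. by rewrite /dagger map_mxM trmx_mul. Qed.

Lemma Uword_rcons (a : seq Sigma) s : Uword U (rcons a s) = U s *m Uword U a.
Proof. by rewrite /Uword foldl_rcons. Qed.

Lemma segment_rcons (a : seq Sigma) x p s :
  (p <= size a)%N -> (s <= size a)%N -> segment (rcons a x) p s = segment a p s.
Proof.
move=> hp hs; rewrite /segment -cats1 !take_drop takel_cat //; lia.
Qed.

Lemma segment_end (a : seq Sigma) x p : (p <= size a)%N ->
  segment (rcons a x) p (size (rcons a x)) = rcons (segment a p (size a)) x.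
Proof.
move=> hp; rewrite /segment drop_rcons // !take_oversize // ?size_rcons ?size_drop //; lia.
Qed.

Lemma Vrec_rcons_a (a : seq Sigma) x S b p :
  (p <= size a)%N -> all (fun s => s <= size a)%N S ->
  Vrec U M (rcons a x) p S b = U x *m Vrec U M a p S b.
Proof.
elim: S b p => [|s S IH] [|g b] p hp /= hS.
- by rewrite segment_end // Uword_rcons.
- by rewrite segment_end // Uword_rcons.
- by rewrite segment_end // Uword_rcons.
- move/andP: hS => [hs hS].
  by rewrite IH // segment_rcons // !mulmxA.
Qed.

Lemma Vrec_rcons_S (a : seq Sigma) S b g p :
  size b = size S ->
  Vrec U M a p (rcons S (size a)) (rcons b g) = M g *m Vrec U M a p S b.
Proof.
elim: S b p => [|s S IH] [|g' b] p //= hb.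
- by rewrite /segment subnn take0 /Uword /= mul1mx.
- by case: hb => hb; rewrite IH // !mulmxA.
Qed.

Lemma sorted_rcons_all (S : seq nat) x :
  sorted leq (rcons S x) -> sorted leq S /\ all (fun y => y <= x)%N S.
Proof.
case: S => [|y S] //=.
elim: S y => [|z S IH] y /=; first by rewrite andbT => ->.
move/andP=> [hyz /IH [hs ha]]; split; first by rewrite hyz hs.
move: ha => /= /andP [hz ->]; rewrite hz andbT.
by rewrite andbT (leq_trans hyz hz).
Qed.

Lemma sorted_rcons_intro (S : seq nat) x :
  sorted leq S -> all (fun y => y <= x)%N S -> sorted leq (rcons S x).
Proof.
case: S => [|y S] //=.
elim: S y => [|z S IH] y /=; first by rewrite andbT.
move/andP=> [hyz hs] /andP [_ ha]; rewrite hyz /=; exact: IH.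
Qed.

Variable rho : 'M[C]_n.
Local Notation D := (inD U M rho).

Lemma inD_mono l l' N N' X : (l <= l')%N -> (N <= N')%N -> D l N X -> D l' N' X.
Proof.
move=> hl hN [a [S [b [hs hb hsz hk ->]]]].
exists a, S, b; split => //; [exact: leq_trans hN | exact: leq_trans hl].
Qed.

Lemma inD_U l N Y s : D l N Y -> D l N.+1 (U s *m Y *m dagger (U s)).
Proof.
move=> [a [S [b [hs hb hsz hk ->]]]].
move/andP: hs => [hso hal].
exists (rcons a s), S, b; split => //.
- rewrite /is_scheduler hso /= size_rcons.
  apply/allP => y /(allP hal) /= hy; exact: leq_trans hy (leqnSn _).
- by rewrite size_rcons.
- by rewrite /Vop Vrec_rcons_a // dagger_mul !mulmxA.
Qed.

Lemma inD_M l N Y g : D l N Y -> D l.+1 N.+1 (M g *m Y *m dagger (M g)).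
Proof.
move=> [a [S [b [hs hb hsz hk ->]]]].
move/andP: hs => [hso hal].
exists a, (rcons S (size a)), (rcons b g); split => //.
- by rewrite /is_scheduler sorted_rcons_intro //= all_rcons leqnn hal.
- by rewrite !size_rcons hb.
- by rewrite size_rcons addnS.
- by rewrite size_rcons.
- by rewrite /Vop Vrec_rcons_S // dagger_mul !mulmxA.
Qed.

Lemma inD_dec l N X : D l N.+1 X ->
  D l N X \/
  (exists s Y, D l N Y /\ X = U s *m Y *m dagger (U s)) \/
  (exists g Y l', l = l'.+1 /\ D l' N Y /\ X = M g *m Y *m dagger (M g)).
Proof.
move=> [a [S [b [hs hb hsz hk ->]]]].
move/andP: hs => [hso hal].
case: (lastP S) hso hal hb hsz hk => [|S' s] hso hal hb hsz hk.
- case: (lastP a) hsz => [|a' x] hsz.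
  + left; exists [::], [::], b; split => //.
  + right; left; exists x, (Vop U M b a' [::] *m rho *m dagger (Vop U M b a' [::])).
    split.
    * exists a', [::], b; split => //; move: hsz; rewrite size_rcons /=; lia.
    * by rewrite /Vop Vrec_rcons_a // dagger_mul !mulmxA.
- have [hso' hle] := @sorted_rcons_all _ _ hso.
  have hsa : (s <= size a)%N by move: hal; rewrite all_rcons => /andP [].
  case: (eqVneq s (size a)) => [es | ns].
  + subst s.
    case: (lastP b) hb => [|b' g] hb; first by rewrite size_rcons in hb.
    move: hb; rewrite !size_rcons => -[hb].
    right; right.
    case: l hk => [|l'] hk; first by rewrite size_rcons in hk.
    exists g, (Vop U M b' a S' *m rho *m dagger (Vop U M b' a S')), l'; split => //; split.
    * exists a, S', b'; split => //.
      -- by rewrite /is_scheduler hso' /=; move: hal; rewrite all_rcons => /andP [].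
      -- by move: hsz; rewrite size_rcons addnS.
      -- by move: hk; rewrite size_rcons.
    * by rewrite /Vop Vrec_rcons_S // dagger_mul !mulmxA.
  + have hlt : (s < size a)%N by rewrite ltn_neqAle ns hsa.
    case: (lastP a) hlt hal hsz hsa => [|a' x] // hlt hal hsz hsa.
    rewrite size_rcons ltnS in hlt.
    have hal' : all (fun y => y <= size a')%N (rcons S' s).
      rewrite all_rcons hlt /=; apply/allP => y /(allP hle) /= hy.
      exact: leq_trans hy hlt.
    right; left; exists x, (Vop U M b a' (rcons S' s) *m rho *m dagger (Vop U M b a' (rcons S' s))).
    split.
    * exists a', (rcons S' s), b; split => //.
      -- by rewrite /is_scheduler hso hal'.
      -- by move: hsz; rewrite size_rcons addSn.
    * by rewrite /Vop Vrec_rcons_a // dagger_mul !mulmxA.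
Qed.

End Aux.

Section Span.
Variables (C : numClosedFieldType) (n : nat).

Lemma span_self (P : 'M[C]_n -> Prop) X : P X -> in_span P X.
Proof.
move=> hX; exists [:: (X, 1)]; split; last by rewrite big_seq1 scale1r.
by move=> p; rewrite inE => /eqP ->.
Qed.

Lemma span0 (P : 'M[C]_n -> Prop) : in_span P 0.
Proof. by exists [::]; rewrite big_nil. Qed.

Lemma spanD (P : 'M[C]_n -> Prop) X Y : in_span P X -> in_span P Y -> in_span P (X + Y).
Proof.
move=> [l1 [h1 ->]] [l2 [h2 ->]]; exists (l1 ++ l2); split; last by rewrite big_cat.
by move=> p; rewrite mem_cat => /orP [/h1|/h2].
Qed.

Lemma spanZ (P : 'M[C]_n -> Prop) c X : in_span P X -> in_span P (c *: X).
Proof.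
move=> [l [h ->]]; exists (map (fun p => (p.1, c * p.2)) l); split.
- by move=> p /mapP [q hq ->]; exact: (h q hq).
- elim: l {h} => [|p l IH]; first by rewrite !big_nil scaler0.
  by rewrite /= !big_cons scalerDr IH scalerA.
Qed.

Lemma span_map (P Q : 'M[C]_n -> Prop) (A B : 'M[C]_n) Y :
  (forall Z, P Z -> in_span Q (A *m Z *m B)) -> in_span P Y -> in_span Q (A *m Y *m B).
Proof.
move=> hf [l [h ->]]; elim: l h => [|p l IH] h.
- by rewrite big_nil mulmx0 mul0mx; exact: span0.
- rewrite big_cons mulmxDr mulmxDl -scalemxAr -scalemxAl.
  apply: spanD; first by apply: spanZ; apply: hf; apply: h; rewrite inE eqxx.
  by apply: IH => q hq; apply: h; rewrite inE hq orbT.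
Qed.

Lemma span_sub (P Q : 'M[C]_n -> Prop) X :
  (forall Z, P Z -> in_span Q Z) -> in_span P X -> in_span Q X.
Proof.
move=> hf hX.
have := @span_map P Q 1%:M 1%:M X _ hX; rewrite mul1mx mulmx1; apply => Z hZ.
by rewrite mul1mx mulmx1; exact: hf.
Qed.

End Span.

Theorem lemma1 (C : numClosedFieldType) (n : nat) (Sigma Gamma : finType)
  (U : Sigma -> 'M[C]_n) (M : Gamma -> 'M[C]_n) (rho : 'M[C]_n) (m k : nat) :
  is_QMM U M -> herm_op rho ->
  (forall l : nat, (l <= k)%N ->
     span_eq (inD U M rho l m) (inD U M rho l m.+1)) ->
  forall l delta : nat, (l <= k)%N ->
     span_eq (inD U M rho l m) (inD U M rho l (m + delta)).
Proof.
move=> _ _ H.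
have key : forall delta l, (l <= k)%N -> forall X,
    inD U M rho l (m + delta) X -> in_span (inD U M rho l m) X.
  elim=> [|d IH] l hl X.
  - by rewrite addn0; exact: span_self.
  - rewrite addnS => /inD_dec [hX | [[s [Y [hY ->]]] | [g [Y [l' [el [hY ->]]]]]]].
    + exact: IH.
    + move: (IH l hl Y hY); apply: span_map => Z hZ.
      apply/(H l hl); apply: span_self; exact: inD_U.
    + subst l.
      have hl' : (l' <= k)%N by exact: ltnW.
      move: (IH l' hl' Y hY); apply: span_map => Z hZ.
      apply/(H _ hl); apply: span_self; exact: inD_M.
move=> l delta hl X; split.
- apply: span_sub => Z hZ; apply: span_self.
  by apply: inD_mono hZ => //; exact: leq_addr.
- by apply: span_sub => Z hZ; exact: key hZ.
Qed.
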